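(* Let $\sqrt{2} = (1.b_1 b_2 b_3 \cdots)_2$ be the binary expansion of $\sqrt 2$. For integers $n \geq 2$, let $L_n(x) = \left\lfloor \frac{x(2^n - x)}{2^{n-2}} \right\rfloor$ for $x \in X_n = \{1, 2, \dots, 2^n - 1\}$, and call $n$ undesirable if there exists $x \in X_n$ with $L_n(x) = 2^{n-1}$. Then an integer $n \geq 2$ is undesirable if $b_{n-1} b_n = 00$, or $b_{n-1} b_n b_{n+1} b_{n+2} = 0100$, or $b_{n-1} b_n b_{n+1} b_{n+2} b_{n+3} = 01010$. *)

(* Defs.v *)
From Stdlib Require Import Reals Arith ZArith Lia.
Open Scope R_scope.

(* k-th binary digit after the point of sqrt 2 (k >= 1):
   sqrt 2 = (1.b_1 b_2 b_3 ...)_2, so b_k = floor(2^k * sqrt 2) mod 2.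
   Int_part is the floor for the (nonnegative) argument used here. *)
Definition sqrt2_bit (k : nat) : nat :=
  if Z.odd (Int_part (2 ^ k * sqrt 2)) then 1%nat else 0%nat.

Close Scope R_scope.

Definition L (n x : nat) : nat := (x * (2 ^ n - x)) / 2 ^ (n - 2).

Definition undesirable (n : nat) : Prop :=
  exists x : nat, 1 <= x <= 2 ^ n - 1 /\ L n x = 2 ^ (n - 1).

(* Main.v *)
Require Import Defs.
From Stdlib Require Import Reals Arith ZArith Lia Lra Psatz.

Open Scope R_scope.
Definition aa (k : nat) : Z := Int_part (2 ^ k * sqrt 2).

Lemma aa_bounds k : IZR (aa k) <= 2 ^ k * sqrt 2 < IZR (aa k) + 1.
Proof. unfold aa. destruct (base_Int_part (2 ^ k * sqrt 2)). lra. Qed.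

Lemma aa_step k : aa (S k) = (2 * aa k)%Z \/ aa (S k) = (2 * aa k + 1)%Z.
Proof.
  destruct (aa_bounds k) as [H1 H2]. destruct (aa_bounds (S k)) as [H3 H4].
  simpl pow in H3, H4.
  assert (IZR (aa (S k)) < IZR (2 * aa k + 2)) by (rewrite plus_IZR, mult_IZR; lra).
  assert (IZR (2 * aa k) < IZR (aa (S k) + 1)) by (rewrite plus_IZR, mult_IZR; lra).
  apply lt_IZR in H. apply lt_IZR in H0. lia.
Qed.

Lemma bit_def k : sqrt2_bit k = if Z.odd (aa k) then 1%nat else 0%nat.
Proof. reflexivity. Qed.

Lemma step0 k : sqrt2_bit (S k) = 0%nat -> aa (S k) = (2 * aa k)%Z.
Proof.
  rewrite bit_def. destruct (aa_step k) as [E|E]; rewrite E; auto.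
  rewrite Z.odd_add, Z.odd_mul; simpl. discriminate.
Qed.

Lemma step1 k : sqrt2_bit (S k) = 1%nat -> aa (S k) = (2 * aa k + 1)%Z.
Proof.
  rewrite bit_def. destruct (aa_step k) as [E|E]; rewrite E; auto.
  rewrite Z.odd_mul; simpl. discriminate.
Qed.

Lemma sqrt2_lt : sqrt 2 < 16/11.
Proof.
  apply Rsqr_incrst_0; unfold Rsqr; try lra.
  - rewrite sqrt_sqrt; lra.
  - apply sqrt_pos.
Qed.

Lemma key_real (A P : R) : 0 <= A -> 0 < P -> A <= P * sqrt 2 -> P * sqrt 2 < A + 11/32 ->
  A * A <= 2 * (P * P) /\ 2 * (P * P) < A * A + P.
Proof.
  intros HA HP H1 H2.
  pose proof sqrt2_lt. pose proof (sqrt_sqrt 2 ltac:(lra)) as Hs.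
  pose proof (sqrt_pos 2).
  assert (Hss : (P * sqrt 2) * (P * sqrt 2) = 2 * (P * P)) by (replace ((P * sqrt 2) * (P * sqrt 2))%R with (P * P * (sqrt 2 * sqrt 2))%R by ring; rewrite Hs; ring).
  split.
  - rewrite <- Hss. apply Rmult_le_compat; lra.
  - rewrite <- Hss.
    assert ((P * sqrt 2 - A) * (P * sqrt 2 + A) <= 11/32 * (2 * (P * sqrt 2))).
    { apply Rmult_le_compat; nra. }
    assert (11/16 * (P * sqrt 2) < P) by nra.
    nra.
Qed.
Close Scope R_scope.

Lemma nat_part (a P : nat) : 0 < P -> a * a <= 2 * (P * P) -> 2 * (P * P) < a * a + P ->
  1 <= 2 * P - a <= 4 * P - 1 /\ ((2 * P - a) * (4 * P - (2 * P - a))) / P = 2 * P.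
Proof.
  intros HP H1 H2.
  assert (a < 2 * P) by nia.
  split; [lia|].
  symmetry. apply (Nat.div_unique _ _ _ (2 * (P * P) - a * a)); [lia|].
  replace (4 * P - (2 * P - a)) with (2 * P + a) by lia.
  replace (2 * P - a) with (2 * P - a) by lia.
  assert ((2 * P - a) * (2 * P + a) + a * a = 4 * (P * P)).
  { replace (2 * P) with ((2 * P - a) + a) at 2 by lia. nia. }
  lia.
Qed.

Theorem proposition2p4 (n : nat) (hn : 2 <= n) :
  (sqrt2_bit (n - 1) = 0 /\ sqrt2_bit n = 0) \/
  (sqrt2_bit (n - 1) = 0 /\ sqrt2_bit n = 1 /\ sqrt2_bit (n + 1) = 0 /\
   sqrt2_bit (n + 2) = 0) \/
  (sqrt2_bit (n - 1) = 0 /\ sqrt2_bit n = 1 /\ sqrt2_bit (n + 1) = 0 /\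
   sqrt2_bit (n + 2) = 1 /\ sqrt2_bit (n + 3) = 0) ->
  undesirable n.
Proof.
  intros H.
  destruct n as [|[|m]]; try lia.
  replace (S (S m) - 1) with (S m) in H by lia.
  replace (S (S m) + 1) with (S (S (S m))) in H by lia.
  replace (S (S m) + 2) with (S (S (S (S m)))) in H by lia.
  replace (S (S m) + 3) with (S (S (S (S (S m))))) in H by lia.
  set (A := aa m).
  assert (Hup : (2 ^ m * sqrt 2 < IZR A + 11/32)%R).
  { destruct H as [[b1 b2]|[[b1 [b2 [b3 b4]]]|[b1 [b2 [b3 [b4 b5]]]]]].
    - pose proof (aa_bounds (S (S m))) as [_ U].
      rewrite (step0 _ b2), (step0 _ b1) in U. rewrite !mult_IZR in U.
      simpl pow in U. fold A in U. lra.
    - pose proof (aa_bounds (S (S (S (S m))))) as [_ U].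
      rewrite (step0 _ b4), (step0 _ b3), (step1 _ b2), (step0 _ b1) in U.
      repeat first [rewrite plus_IZR in U | rewrite mult_IZR in U]. simpl pow in U. fold A in U. lra.
    - pose proof (aa_bounds (S (S (S (S (S m)))))) as [_ U].
      rewrite (step0 _ b5), (step1 _ b4), (step0 _ b3), (step1 _ b2), (step0 _ b1) in U.
      repeat first [rewrite plus_IZR in U | rewrite mult_IZR in U]. simpl pow in U. fold A in U. lra. }
  pose proof (aa_bounds m) as [Hlo _]. fold A in Hlo.
  assert (HA0 : (0 <= A)%Z).
  { pose proof (aa_bounds m) as [_ U]. fold A in U.
    assert (0 <= 2 ^ m * sqrt 2)%R by (apply Rmult_le_pos; [apply pow_le; lra|apply sqrt_pos]).
    assert (IZR (-1) < IZR A)%R by lra. apply lt_IZR in H1. lia. }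
  set (a := Z.to_nat A).
  assert (Ha : INR a = IZR A) by (unfold a; rewrite INR_IZR_INZ, Z2Nat.id; auto).
  set (P := 2 ^ m).
  assert (HP : INR P = (2 ^ m)%R) by (unfold P; rewrite pow_INR; simpl; f_equal; lra).
  assert (HP0 : 0 < P) by (unfold P; apply Nat.neq_0_lt_0, Nat.pow_nonzero; lia).
  destruct (key_real (INR a) (INR P)) as [K1 K2].
  - apply pos_INR.
  - apply lt_0_INR; auto.
  - rewrite Ha, HP. auto.
  - rewrite Ha, HP. auto.
  - assert (a * a <= 2 * (P * P)).
    { apply INR_le. rewrite !mult_INR. simpl (INR 2). replace (1+1)%R with 2%R by ring. auto. }
    assert (2 * (P * P) < a * a + P).
    { apply INR_lt. rewrite plus_INR, !mult_INR. simpl (INR 2). replace (1+1)%R with 2%R by ring. auto. }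
    destruct (nat_part a P HP0 H0 H1) as [X1 X2].
    exists (2 * P - a).
    assert (E1 : 2 ^ S (S m) = 4 * P) by (unfold P; simpl; lia).
    assert (E2 : 2 ^ (S (S m) - 1) = 2 * P) by (unfold P; replace (S (S m) - 1) with (S m) by lia; simpl; lia).
    assert (E3 : S (S m) - 2 = m) by lia.
    unfold L. rewrite E1, E2, E3. fold P. split; [lia|]. exact X2.
Qed.
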